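(* Let $k\ge 3$ and $s\ge 1$ be integers. For every sufficiently large $n$ there exists $\mathcal{G} \subset \binom{[n]}{k}$ with $\nu(\mathcal{G}) = s$ and $|\mathcal{G}| = (1+o(1))\binom{2s+1}{2}\binom{n}{k-2}$ (as $n\to\infty$) such that $|\partial\mathcal{G}| < |\partial L_{|\mathcal{G}|}EM(n,k,s,1)|$.
   Context: $[n]=\{1,\dots,n\}$, $\binom{[n]}{k}$ is the family of $k$-subsets of $[n]$. $\nu(\mathcal{G})$ is the maximum number of pairwise disjoint members of $\mathcal{G}$. $\partial\mathcal{G}=\{A\in\binom{[n]}{k-1}: A\subset B\text{ for some }B\in\mathcal{G}\}$. Colex order on $\binom{[n]}{k}$: $A\prec B$ iff $\max\big((A\setminus B)\cup(B\setminus A)\big)\in B$; for $\mathcal{F}\subset\binom{[n]}{k}$ and $m\le|\mathcal{F}|$, $L_m\mathcal{F}$ is the set of the first $m$ members of $\mathcal{F}$ in colex order. $EM(n,k,s,1)=\{A\in\binom{[n]}{k}: A\cap[s]\ne\emptyset\}$. *)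

(* Defs.v *)
From mathcomp Require Import all_boot all_order all_algebra.
Set Implicit Arguments. Unset Strict Implicit. Unset Printing Implicit Defensive.

(* Ground set [n] = {1,...,n} is modelled by 'I_n = {0,...,n-1}, element i
   standing for i+1 (order-preserving, so colex order is unchanged). *)

Definition k_uniform (n k : nat) (G : {set {set 'I_n}}) : bool :=
  [forall A in G, #|A| == k].

Definition pairwise_disjoint (n : nat) (F : {set {set 'I_n}}) : bool :=
  [forall A in F, forall B in F, (A != B) ==> [disjoint A & B]].

Definition nu (n : nat) (G : {set {set 'I_n}}) : nat :=
  \max_(F in powerset G | pairwise_disjoint F) #|F|.

Definition shadow (n k : nat) (G : {set {set 'I_n}}) : {set {set 'I_n}} :=
  [set A : {set 'I_n} | (#|A| == k.-1) && [exists B in G, A \subset B]].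

Definition colex_lt (n : nat) (A B : {set 'I_n}) : bool :=
  let D := (A :\: B) :|: (B :\: A) in
  [exists b in D, (b \in B) && [forall x in D, (x <= b)%N]].

Definition colex_init (n : nat) (m : nat) (F : {set {set 'I_n}}) : {set {set 'I_n}} :=
  [set A in F | #|[set B in F | colex_lt B A]| < m].

Definition EM1 (n k s : nat) : {set {set 'I_n}} :=
  [set A : {set 'I_n} | (#|A| == k) && [exists i in A, (val i < s)%N]].

(* Main.v *)
Require Import Defs.
From mathcomp Require Import all_boot all_order all_algebra zify.


Lemma exp_mono m n e : m <= n -> m ^ e <= n ^ e.
Proof. by case: e => [//|e] h; rewrite leq_exp2r. Qed.

Lemma ffact_ge n j : (n - j) ^ j <= n ^_ j.
Proof.
elim: j n => [|j IH] n; first by [].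
rewrite ffactnS expnS; apply: leq_mul; first by rewrite leq_subr.
apply: leq_trans (IH n.-1); apply: exp_mono; lia.
Qed.

Lemma ffact_le n j : n ^_ j <= n ^ j.
Proof.
elim: j n => [|j IH] n; first by [].
rewrite ffactnS expnS; apply: leq_mul => //.
apply: leq_trans (IH n.-1) _; apply: exp_mono; lia.
Qed.

Lemma bin_ge x j : x <= 'C(x + j, j.+1).
Proof.
elim: j => [|j IH]; first by rewrite addn0 bin1.
by rewrite addnS binS; apply: leq_trans IH (leq_addl _ _).
Qed.

Lemma exists_big N j : exists i, N < 'C(i, j.+1).
Proof. exists (N.+1 + j); exact: bin_ge. Qed.

Definition Ivl n lo hi := [set x : 'I_n | lo <= x < hi].

Lemma card_Ivl n lo hi : hi <= n -> #|Ivl n lo hi| = hi - lo.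
Proof.
move=> hn; rewrite /Ivl -sum1dep_card.
rewrite -(big_mkord (fun x => lo <= x < hi) (fun _ => 1)) sum1_count.
have [lh|hl] := leqP lo hi; last first.
  have -> : hi - lo = 0 by lia.
  apply/eqP; rewrite -leqn0 leqNgt -has_count; apply/hasPn => x _; lia.
have -> : n = lo + ((hi - lo) + (n - hi)) by lia.
rewrite /index_iota subn0 iotaD iotaD !count_cat add0n.
rewrite (eq_in_count (a1 := fun x => lo <= x < hi) (a2 := pred0)); last first.
  move=> x; rewrite mem_iota /=; lia.
rewrite count_pred0 (eq_in_count (a1 := fun x => lo <= x < hi) (a2 := predT)); last first.
  move=> x; rewrite mem_iota /=; lia.
rewrite count_predT size_iota (eq_in_count (a1 := fun x => lo <= x < hi) (a2 := pred0)); last first.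
  move=> x; rewrite mem_iota /=; lia.
by rewrite count_pred0; lia.
Qed.

Set Implicit Arguments. Unset Strict Implicit.

Lemma inIvl n lo hi (x : 'I_n) : (x \in Ivl n lo hi) = (lo <= x < hi).
Proof. by rewrite inE. Qed.

Lemma disj_helper (T : finType) (P R I : {set T}) :
  P \subset I -> R :&: I = set0 -> P :&: R = set0.
Proof.
move=> /subsetP PI RI; apply/setP => x; rewrite !inE.
have /setP/(_ x) := RI; rewrite !inE /=.
by case xP: (x \in P) => //=; rewrite (PI x xP) andbT.
Qed.

Section Comb.
Variables kk ss : nat.
Local Notation a := (2 * ss.+1 + 1).

Definition GG n b : {set {set 'I_n}} :=
  [set A : {set 'I_n} | [&& #|A| == kk.+3, #|A :&: Ivl n 0 a| == 2 & A \subset Ivl n 0 (a + b)]].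

Lemma Ivl_disj n lo hi lo' hi' : hi <= lo' -> Ivl n lo hi :&: Ivl n lo' hi' = set0.
Proof. move=> h; apply/setP => x; rewrite !inE; lia. Qed.

Lemma card_GG n b : a + b <= n -> #|GG n b| = 'C(a, 2) * 'C(b, kk.+1).
Proof.
move=> hab.
set I := Ivl n 0 a; set J := Ivl n a (a + b).
set X := [set P : {set 'I_n} | P \subset I & #|P| == 2].
set Y := [set R : {set 'I_n} | R \subset J & #|R| == kk.+1].
have IJ : I :&: J = set0 by apply: Ivl_disj.
have RI R : R \in Y -> R :&: I = set0.
  rewrite inE => /andP[/subsetP RJ _]; apply/setP => x; rewrite !inE.
  case xR: (x \in R) => //=; have := RJ _ xR; rewrite !inE; lia.
have PI P : P \in X -> P :&: I = P.
  by rewrite inE => /andP[PI _]; apply/setIidPl.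
have -> : GG n b = [set PR.1 :|: PR.2 | PR in setX X Y].
  apply/setP => A; rewrite inE; apply/and3P/imsetP.
  - move=> [/eqP cA /eqP cAI AS]; exists (A :&: I, A :\: I); last by rewrite /= setID.
    rewrite inE /= !inE subsetIr cAI eqxx /=.
    have := cardsID I A; rewrite cA cAI => h.
    apply/andP; split; last by rewrite -(eqn_add2l 2) h.
    apply/subsetP => x; rewrite !inE => /andP[xI xA].
    have := subsetP AS x xA; rewrite !inE; move: xI; lia.
  - move=> [[P R]]; rewrite inE /= => /andP[XP YR] ->.
    move: (XP) (YR); rewrite !inE => /andP[sPI /eqP cP] /andP[sRJ /eqP cR].
    have PR : P :&: R = set0 by apply: disj_helper sPI (RI R YR).
    split.
    + by rewrite cardsU PR cards0 cP cR.
    + by rewrite setIUl PI // RI // setU0 cP.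
    + rewrite subUset; apply/andP; split.
      * apply/subsetP => x /(subsetP sPI); rewrite !inE; lia.
      * apply/subsetP => x /(subsetP sRJ); rewrite !inE; lia.
rewrite card_in_imset ?cardsX.
  rewrite !cards_draws !card_Ivl //; first by rewrite subn0 addKn.
  lia.
move=> [P R] [P' R']; rewrite !in_setX /= => /andP[XP YR] /andP[XP' YR'] E.
have recP Q S : Q \in X -> S \in Y -> (Q :|: S) :&: I = Q.
  by move=> XQ YS; rewrite setIUl PI // RI // setU0.
have EP : P = P' by rewrite -(recP P R) // E recP.
have rec Q S : Q \in X -> S \in Y -> (Q :|: S) :\: I = S.
  move=> XQ YS; apply/setP => x; rewrite !inE.
  have /setP/(_ x) := RI S YS; rewrite !inE /= => h.
  move: XQ; rewrite inE => /andP[/subsetP QI _].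
  case xQ: (x \in Q). { have := QI x xQ. rewrite /I inE => /andP[_ xa]. rewrite xa. move: h. rewrite xa. case: (x \in S) => //. }
  by case xS: (x \in S) => //=; move: h; rewrite xS /=; case: (x < a).
have ER : R = R' by rewrite -(rec P R) // E rec.
by rewrite EP ER.
Qed.
End Comb.

Set Implicit Arguments. Unset Strict Implicit.

Section Comb2.
Variables kk ss : nat.
Local Notation a := (2 * ss.+1 + 1).

Lemma shadow_GG n b : a + b <= n ->
  #|shadow kk.+3 (GG kk ss n b)| <= a * 'C(b, kk.+1) + 'C(a, 2) * 'C(b, kk).
Proof.
move=> hab.
set I := Ivl n 0 a; set J := Ivl n a (a + b).
pose F j1 j2 := [set PR.1 :|: PR.2 | PR in setX [set P : {set 'I_n} | P \subset I & #|P| == j1]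
                                          [set R : {set 'I_n} | R \subset J & #|R| == j2]].
have cF j1 j2 : #|F j1 j2| <= 'C(a, j1) * 'C(b, j2).
  apply: leq_trans (leq_imset_card _ _) _.
  by rewrite cardsX !cards_draws !card_Ivl ?subn0 ?addKn //; lia.
have sub : shadow kk.+3 (GG kk ss n b) \subset F 1 kk.+1 :|: F 2 kk.
  apply/subsetP => B; rewrite inE => /andP[/eqP cB /existsP[A /andP[]]].
  rewrite inE => /and3P[/eqP cA /eqP cAI sA] sBA.
  have h1 := cardsID I B; have h2 := cardsID I A.
  have l1 : #|B :&: I| <= 2.
    by rewrite -cAI; apply: subset_leq_card; apply: setSI.
  have l2 : #|B :\: I| <= #|A :\: I|.
    by apply: subset_leq_card; apply: setSD.
  have sBJ : B :\: I \subset J.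
    apply/subsetP => x; rewrite !inE => /andP[xI xB].
    have := subsetP sA x (subsetP sBA x xB); rewrite !inE; move: xI; lia.
  have sBI : B :&: I \subset I by apply: subsetIr.
  rewrite inE; apply/orP.
  rewrite cAI cA in h2; rewrite cB in h1.
  have : (#|B :&: I| = 1 /\ #|B :\: I| = kk.+1) \/ (#|B :&: I| = 2 /\ #|B :\: I| = kk).
    move: h1 h2 l1 l2; set p := #|B :&: I|; set r := #|B :\: I|; set q := #|A :\: I|; lia.
  case=> [[e1 e2]|[e1 e2]].
  - left; apply/imsetP; exists (B :&: I, B :\: I); last by rewrite /= setID.
    by rewrite in_setX !inE sBI sBJ e1 e2 /=.
  - right; apply/imsetP; exists (B :&: I, B :\: I); last by rewrite /= setID.
    by rewrite in_setX !inE sBI sBJ e1 e2 /=.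
apply: leq_trans (subset_leq_card sub) _.
apply: leq_trans (leq_card_setU _ _).1 _.
by apply: leq_add; apply: leq_trans (cF _ _) _; rewrite ?bin1.
Qed.
End Comb2.

Set Implicit Arguments. Unset Strict Implicit.

Section Comb3.
Variables kk ss : nat.
Local Notation a := (2 * ss.+1 + 1).

Lemma nu_GG_le n b (F : {set {set 'I_n}}) : a <= n ->
  F \subset GG kk ss n b -> pairwise_disjoint F -> #|F| <= ss.+1.
Proof.
move=> an sFG /forall_inP pd.
set I := Ivl n 0 a.
pose P := [set A :&: I | A in F].
have cAI A : A \in F -> #|A :&: I| = 2.
  by move=> /(subsetP sFG); rewrite inE => /and3P[_ /eqP -> _].
have dis A B : A \in F -> B \in F -> A != B -> [disjoint A & B].
  by move=> AF BF AB; have /forall_inP/(_ B BF) := pd A AF; rewrite AB.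
have inj : {in F &, injective (fun A => A :&: I)}.
  move=> A B AF BF /= E; apply/eqP; apply: contraT => AB.
  have := dis A B AF BF AB; rewrite -setI_eq0 => /eqP AB0.
  have : A :&: I :&: (B :&: I) = set0.
    by rewrite setIACA AB0 set0I.
  rewrite -E setIid => /eqP; rewrite -cards_eq0 cAI //.
have cP : #|P| = #|F| by rewrite card_in_imset.
have tP : trivIset P.
  apply/trivIsetP => X Y /imsetP[A AF ->] /imsetP[B BF ->] XY.
  have AB : A != B by apply: contraNneq XY => ->.
  have := dis A B AF BF AB.
  by move=> d; apply: disjointWl (subsetIl A I) _; rewrite disjoint_sym; apply: disjointWl (subsetIl B I) _; rewrite disjoint_sym.
have := (leq_card_cover P).2; rewrite tP => /eqP eq.
have sum2 : \sum_(X in P) #|X| = #|P| * 2.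
  rewrite -sum_nat_const; apply: eq_bigr => X /imsetP[A AF ->]; exact: cAI.
have cov : #|cover P| <= a.
  rewrite -[a]subn0 -(@card_Ivl n 0 a an) -/I; apply: subset_leq_card.
  by apply/bigcupsP => X /imsetP[A AF ->]; apply: subsetIr.
move: cov; rewrite eq sum2 cP; lia.
Qed.


Definition Ai n (i : nat) : {set 'I_n} :=
  Ivl n (2 * i) (2 * i + 2) :|: Ivl n (a + i * kk.+1) (a + i.+1 * kk.+1).

Lemma Ai_in n b i : a + b <= n -> ss.+1 * kk.+1 <= b -> i < ss.+1 ->
  Ai n i \in GG kk ss n b.
Proof.
move=> hab hb hi.
have hib : i.+1 * kk.+1 <= b by apply: leq_trans hb; rewrite leq_mul2r hi orbT.
rewrite inE /Ai; apply/and3P; split.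
- rewrite cardsU Ivl_disj ?cards0 ?subn0 ?card_Ivl; lia.
- rewrite setIUl.
  have -> : Ivl n (a + i * kk.+1) (a + i.+1 * kk.+1) :&: Ivl n 0 a = set0.
    by apply/setP => x; rewrite !inE; lia.
  rewrite setU0.
  have -> : Ivl n (2 * i) (2 * i + 2) :&: Ivl n 0 a = Ivl n (2 * i) (2 * i + 2).
    apply/setP => x; rewrite !inE; lia.
  rewrite card_Ivl; lia.
- rewrite subUset; apply/andP; split; apply/subsetP => x; rewrite !inE; lia.
Qed.

Lemma nu_GG_ge n b : a + b <= n -> ss.+1 * kk.+1 <= b ->
  exists F : {set {set 'I_n}},
    [/\ F \subset GG kk ss n b, pairwise_disjoint F & #|F| = ss.+1].
Proof.
move=> hab hb.
exists [set Ai n (val i) | i : 'I_ss.+1]; split.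
- apply/subsetP => A /imsetP[i _ ->]; apply: Ai_in => //; exact: ltn_ord.
- rewrite /pairwise_disjoint; apply/forall_inP => A /imsetP[[i hi] _ ->]; apply/forall_inP => B /imsetP[[j hj] _ ->].
  apply/implyP => /= Aij.
  have ij : i != j by apply: contraNneq Aij => ->.
  rewrite -setI_eq0; apply/eqP/setP => x; rewrite !inE.
  have h1 : i < j -> i.+1 * kk.+1 <= j * kk.+1 by move=> h; rewrite leq_mul2r h orbT.
  have h2 : j < i -> j.+1 * kk.+1 <= i * kk.+1 by move=> h; rewrite leq_mul2r h orbT.
  apply/negbTE; lia.
- rewrite card_in_imset ?card_ord //.
  move=> [i hi] [j hj] _ _ /= E.
  have lt : 2 * i < n by lia.
  have /setP/(_ (Ordinal lt)) := E; rewrite !inE /=.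
  have h1 : j < i -> j.+1 * kk.+1 <= i * kk.+1 by move=> h; rewrite leq_mul2r h orbT.
  move=> h; apply: val_inj => /=; move: h; lia.
Qed.

End Comb3.

Set Implicit Arguments. Unset Strict Implicit.

Lemma card_bigcup_le (T : finType) N (U : nat -> {set T}) :
  #|\bigcup_(i < N) U i| <= \sum_(i < N) #|U i|.
Proof.
elim: N => [|N IH]; first by rewrite !big_ord0 cards0.
rewrite !big_ord_recr /=.
apply: leq_trans (leq_card_setU _ _).1 _.
by rewrite leq_add2r.
Qed.

Section Colex.
Variables (n s0 kk t m0 : nat).
Hypotheses (s0pos : 0 < s0) (kt : kk.+3 <= t) (tn : t <= n).
Let E := EM1 n kk.+3 s0.
Let It := Ivl n 0 t.
Let St := [set A in E | A \subset It].

Lemma cardIt : #|It| = t.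
Proof. by rewrite /It card_Ivl // subn0. Qed.

Lemma card_St : #|St| <= s0 * 'C(t.-1, kk.+2).
Proof.
pose U i := [set A : {set 'I_n} | [&& A \subset It, #|A| == kk.+3 & [exists x in A, val x == i]]].
have sub : St \subset \bigcup_(i < s0) U i.
  apply/subsetP => A; rewrite !inE => /andP[/andP[cA /existsP[x /andP[xA xs]]] sA].
  apply/bigcupP; exists (Ordinal xs) => //.
  rewrite inE sA cA /=; apply/existsP; exists x; by rewrite xA eqxx.
have bU i : #|U i| <= 'C(t.-1, kk.+2).
  have [it|ti] := ltnP i t; last first.
    suff -> : U i = set0 by rewrite cards0.
    apply/setP => A; rewrite !inE.
    apply/negbTE; apply/negP => /and3P[/subsetP sA _ /existsP[x /andP[xA /eqP xi]]].
    have := sA x xA; have xi2 : nat_of_ord x = i := xi; rewrite inE; lia.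
  have lt : i < n by lia.
  set x0 := Ordinal lt.
  have inj : {in U i &, injective (fun A => A :\ x0)}.
    move=> A B; rewrite !inE => /and3P[_ _ /existsP[x /andP[xA /eqP xi]]].
    move=> /and3P[_ _ /existsP[y /andP[yB /eqP yi]]] /= E0.
    have ex : x = x0 by apply: val_inj.
    have ey : y = x0 by apply: val_inj.
    by rewrite -(setD1K xA) -(setD1K yB) ex ey E0.
  rewrite -(card_in_imset inj).
  have sub2 : [set A :\ x0 | A in U i] \subset [set B : {set 'I_n} | B \subset It :\ x0 & #|B| == kk.+2].
    apply/subsetP => B /imsetP[A]; rewrite inE => /and3P[sA /eqP cA /existsP[x /andP[xA /eqP xi]]] ->.
    have ex : x = x0 by apply: val_inj.
    rewrite inE; apply/andP; split; first by apply: setSD.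
    by have := cardsD1 x0 A; rewrite -ex xA cA add1n => -[<-].
  apply: leq_trans (subset_leq_card sub2) _.
  rewrite cards_draws; apply: leq_bin2l.
  have := cardsD1 x0 It; rewrite cardIt inE /=.
  by move=> ->; rewrite it.
apply: leq_trans (subset_leq_card sub) _.
apply: leq_trans (@card_bigcup_le _ s0 U) _.
rewrite -[s0 in X in X * _]card_ord -sum_nat_const; apply: leq_sum => i _; exact: bU.
Qed.


Lemma St_colex : #|St| <= m0 -> St \subset colex_init m0 E.
Proof.
move=> hm; apply/subsetP => A AS.
have AS' := AS; rewrite inE in AS'; move/andP: AS' => [AE /subsetP sA].
rewrite /colex_init inE AE /=.
have sub : [set B in E | colex_lt B A] \subset St :\ A.
  apply/subsetP => B; rewrite inE => /andP[BE].
  rewrite /colex_lt => /existsP[b /andP[bD /andP[bA /forall_inP bmax]]].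
  move: (BE); rewrite /E inE => BE2; rewrite !inE BE2 /=; apply/andP; split.
    apply/negP => /eqP BA; move: bD; rewrite BA !inE; by case: (b \in A); rewrite /= ?andbF.
  apply/subsetP => y yB; rewrite inE; apply/negPn/negP => yt.
  have yA : y \notin A by apply/negP => /sA; rewrite inE; move: yt; rewrite ?inE; lia.
  have yD : y \in (B :\: A) :|: (A :\: B) by rewrite !inE yA yB.
  have := bmax y yD; have := sA b bA; rewrite !inE; move: yt; rewrite ?inE; lia.
apply: leq_ltn_trans (subset_leq_card sub) _.
have := cardsD1 A St; rewrite AS add1n => h.
by rewrite -h.
Qed.

Lemma shadow_colex : s0 * 'C(t.-1, kk.+2) <= m0 ->
  'C(t, kk.+2) <= #|shadow kk.+3 (colex_init m0 E)|.
Proof.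
move=> hm.
have sSt := St_colex (leq_trans card_St hm).
have n0 : 0 < n by lia.
pose Q := [set B : {set 'I_n} | B \subset It & #|B| == kk.+2].
have -> : 'C(t, kk.+2) = #|Q| by rewrite cards_draws cardIt.
apply: subset_leq_card; apply/subsetP => B; rewrite inE => /andP[sB /eqP cB].
have [x [xB xt xs]] : exists x : 'I_n, [/\ x \notin B, x < t & [exists y in x |: B, val y < s0]].
  have [ex|nex] := boolP [exists y in B, val y < s0].
    have : It :\: B != set0.
      rewrite -cards_eq0 cardsD cardIt (setIidPr sB) cB; apply/eqP; lia.
    case/set0Pn => x; rewrite !inE => /andP[xB xt]; exists x; split => //.
    case/existsP: ex => y /andP[yB ys]; apply/existsP; exists y; by rewrite !inE yB orbT.
  exists (Ordinal n0); split => //=.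
  - apply/negP => h; move/negP: nex; apply; apply/existsP; exists (Ordinal n0); by rewrite h.
  - lia.
  - apply/existsP; exists (Ordinal n0); by rewrite !inE eqxx.
rewrite /shadow inE cB eqxx /=; apply/existsP; exists (x |: B); rewrite subsetUr andbT.
apply: (subsetP sSt); rewrite !inE xs cardsU1 xB cB andbT /=.
rewrite subUset sB andbT sub1set inE; lia.
Qed.

End Colex.

Set Implicit Arguments. Unset Strict Implicit.

Section Num.
Variables kk ss : nat.
Local Notation a := (2 * ss.+1 + 1).
Local Notation s := ss.+1.

Definition Mn n := 'C(n - a, kk.+1).
Definition tn n := ex_minn (exists_big (a * Mn n) kk.+1).
Definition Tn n := 'C((tn n).-1, kk.+2).
Lemma exQ n : exists j, Tn n <= a * 'C(j, kk.+1).
Proof.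
have [j hj] := exists_big (Tn n) kk; exists j.
apply: leq_trans (ltnW hj) _; rewrite leq_pmull //; lia.
Qed.
Definition bn n := ex_minn (exQ n).

Lemma tn_spec n : a * Mn n < 'C(tn n, kk.+2) /\ forall i, a * Mn n < 'C(i, kk.+2) -> tn n <= i.
Proof. rewrite /tn; case: ex_minnP => t h1 h2; split => //. Qed.

Lemma bn_spec n : Tn n <= a * 'C(bn n, kk.+1) /\ forall j, Tn n <= a * 'C(j, kk.+1) -> bn n <= j.
Proof. rewrite /bn; case: ex_minnP => t h1 h2; split => //. Qed.

Lemma c_eq : 'C(a, 2) = a * s.
Proof.
rewrite bin2.
have -> : (a * a.-1) = (a * s).*2 by rewrite -mul2n; lia.
by rewrite doubleK.
Qed.

Lemma bin_le1 t j : t <= j -> 'C(t, j) <= 1.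
Proof.
rewrite leq_eqVlt => /orP[/eqP ->|h]; first by rewrite binn.
by rewrite bin_small.
Qed.

Lemma M_ge n : n - a - kk <= Mn n.
Proof.
rewrite /Mn; have [h|h] := leqP kk (n - a).
  by have := bin_ge (n - a - kk) kk; rewrite subnK.
have -> : n - a - kk = 0 by lia.
by [].
Qed.

Lemma t_gt n L : 'C(L, kk.+2) <= a * Mn n -> L < tn n.
Proof.
move=> h; rewrite ltnNge; apply/negP => tL.
have [h1 _] := tn_spec n.
have := leq_bin2l kk.+2 tL; lia.
Qed.

Lemma t_ge3 n : kk.+1 <= n - a -> kk.+3 <= tn n.
Proof.
move=> h; apply: t_gt; rewrite binn.
have := M_ge n; lia.
Qed.

Lemma T_le n : kk.+1 <= n - a -> Tn n <= a * Mn n.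
Proof.
move=> h; have t3 := t_ge3 h; have [_ h2] := tn_spec n.
rewrite leqNgt; apply/negP => /h2; lia.
Qed.

Lemma T_split n : kk.+1 <= n - a -> 'C(tn n, kk.+2) = Tn n + 'C((tn n).-1, kk.+1).
Proof.
move=> h; have t3 := t_ge3 h.
by rewrite /Tn -binS prednK //; lia.
Qed.

Lemma T_pos n : kk.+1 <= n - a -> 0 < Tn n.
Proof.
move=> h; have t3 := t_ge3 h; rewrite /Tn.
have := bin_ge ((tn n).-1 - kk.+1) kk.+1; rewrite subnK; lia.
Qed.

Lemma b_le n : kk.+1 <= n - a -> bn n <= n - a.
Proof. move=> h; have [_ h2] := bn_spec n; apply: h2; exact: T_le. Qed.

Lemma b_pos n : kk.+1 <= n - a -> 0 < bn n.
Proof.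
move=> h; have [h1 _] := bn_spec n; have := T_pos h.
case E: (bn n) h1 => [|b] //; rewrite bin0n; lia.
Qed.

Lemma b_pred n : kk.+1 <= n - a -> a * 'C((bn n).-1, kk.+1) < Tn n.
Proof.
move=> h; have [_ h2] := bn_spec n; have bp := b_pos h.
rewrite ltnNge; apply/negP => /h2; lia.
Qed.


Definition K0 := a * kk.+2 * (2 * (2 * s)) ^ kk.+1.
Definition K1 := K0 + 2 * kk + 4.
Definition thr1 := 2 * s * (K1 + kk + 2) + kk.

Lemma t_small n : thr1 <= n - a -> 2 * s * tn n <= n - a - kk.
Proof.
rewrite /thr1 => hm.
set m := n - a in hm *.
set q := 2 * s.
have q2 : 2 <= q by rewrite /q; lia.
set i0 := (m - kk) %/ q.
have hi0 : K1 + kk + 2 <= i0 by rewrite /i0 leq_divRL; lia.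
have hup : m - kk < i0.+1 * q by apply: ltn_ceil; lia.
set y := i0 - kk.+2.
have hy : K1 <= y by rewrite /y; lia.
have my : m <= 2 * q * y.
  have : q * (kk + 3) + kk <= q * y.
    have : q * (kk + 3) + kk <= q * (2 * kk + 3) by nia.
    move/leq_trans; apply; rewrite leq_mul2l; apply/orP; right; rewrite /K1 in hy; lia.
  nia.
have key : a * Mn n < 'C(i0, kk.+2).
  rewrite -(ltn_pmul2r (fact_gt0 kk.+2)) bin_ffact.
  apply: leq_trans (ffact_ge i0 kk.+2); rewrite -/y.
  rewrite factS /Mn -/m mulnCA -mulnA bin_ffact.
  have h1 : m ^_ kk.+1 <= (2 * q) ^ kk.+1 * y ^ kk.+1.
    by rewrite -expnMn; apply: leq_trans (ffact_le _ _) _; apply: exp_mono.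
  have h2 : K0 < y by rewrite /K1 in hy; lia.
  have ypos : 0 < y ^ kk.+1 by rewrite expn_gt0; lia.
  rewrite expnS.
  apply: (@leq_ltn_trans (K0 * y ^ kk.+1)).
    rewrite /K0 -/q mulnCA -!mulnA; do 2! (rewrite leq_mul2l; apply/orP; right); exact: h1.
  by rewrite ltn_pmul2r.
have [_ h2] := tn_spec n.
have := h2 _ key => ti.
apply: leq_trans (leq_divM (m - kk) q); rewrite -/i0 mulnC leq_mul2r ti orbT //.
Qed.


Lemma thr1_ge : kk.+1 <= thr1.
Proof. rewrite /thr1; nia. Qed.

Lemma key6 n : thr1 <= n - a -> (a + 'C(a, 2)) * 'C(n - a, kk) <= 'C((tn n).-1, kk.+1).
Proof.
move=> hm; have h := leq_trans thr1_ge hm.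
have t3 := t_ge3 h; have [H1 _] := tn_spec n; have H2 := t_small hm.
set t := tn n in t3 H1 H2 *.
set m := n - a in h hm H1 H2 *.
set X := 'C(t.-1, kk.+1); set Cm := 'C(m, kk).
have E1 : t * X = kk.+2 * 'C(t, kk.+2) by rewrite mul_bin_diag.
have E2 : kk.+1 * Mn n = (m - kk) * Cm by rewrite /Mn mul_bin_left.
have : t * (2 * a * s * Cm) < t * X.
  rewrite E1.
  apply: (@leq_ltn_trans (a * (kk.+2 * Mn n))); last first.
    by rewrite mulnCA ltn_pmul2l.
  apply: (@leq_trans (a * (kk.+1 * Mn n))); last by rewrite leq_mul2l leq_mul2r leqnSn !orbT.
  rewrite E2.
  have : 2 * s * t * Cm <= (m - kk) * Cm by rewrite leq_mul2r H2 orbT.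
  move=> hh; have -> : t * (2 * a * s * Cm) = a * (2 * s * t * Cm) by lia.
  by rewrite leq_mul2l hh orbT.
rewrite ltn_pmul2l; last by lia.
move=> lt; apply: ltnW; apply: leq_ltn_trans lt; rewrite c_eq leq_mul2r; apply/orP; right; nia.
Qed.


Lemma key7 n : thr1 <= n - a ->
  a * 'C(bn n, kk.+1) + 'C(a, 2) * 'C(bn n, kk) < 'C(tn n, kk.+2).
Proof.
move=> hm; have h := leq_trans thr1_ge hm.
have K6 := key6 hm; have bp := b_pos h; have bm := b_le h; have bpr := b_pred h.
rewrite (T_split h).
have l1 : a * 'C((bn n).-1, kk) <= a * 'C(n - a, kk).
  by rewrite leq_mul2l leq_bin2l ?orbT //; lia.
have l2 : 'C(a, 2) * 'C(bn n, kk) <= 'C(a, 2) * 'C(n - a, kk).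
  by rewrite leq_mul2l leq_bin2l ?orbT.
rewrite -(prednK bp) binS prednK //.
move: K6 l1 l2 bpr; set X := 'C(_, kk.+1); set C2 := 'C(a, 2); lia.
Qed.

Lemma key8 n : s * Tn n <= 'C(a, 2) * 'C(bn n, kk.+1).
Proof.
have [h1 _] := bn_spec n.
rewrite c_eq; have : s * Tn n <= s * (a * 'C(bn n, kk.+1)) by rewrite leq_mul2l h1 orbT.
lia.
Qed.

Lemma key9 n : thr1 <= n - a ->
  'C(a * 'C(s * kk.+1, kk.+1) + kk.+3, kk.+2) + kk <= n - a -> s * kk.+1 <= bn n.
Proof.
move=> hm hL; have h := leq_trans thr1_ge hm.
have tL : a * 'C(s * kk.+1, kk.+1) + kk.+3 < tn n.
  apply: t_gt; have := M_ge n; lia.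
rewrite leqNgt; apply/negP => bl.
have [h1 _] := bn_spec n.
have := leq_bin2l kk.+1 (ltnW bl) => h2.
have := bin_ge ((tn n).-1 - kk.+1) kk.+1; rewrite subnK; last by lia.
rewrite -/(Tn n) => h3.
have : a * 'C(bn n, kk.+1) <= a * 'C(s * kk.+1, kk.+1) by rewrite leq_mul2l h2 orbT.
lia.
Qed.

Lemma bin_shift m d j : 'C(m + d, j.+1) <= 'C(m, j.+1) + d * 'C(m + d, j).
Proof.
elim: d => [|d IH]; first by rewrite addn0 mul0n addn0.
rewrite addnS binS.
have : 'C(m + d, j) <= 'C((m + d).+1, j) by apply: leq_bin2l.
move=> hh; have : d * 'C(m + d, j) <= d * 'C((m + d).+1, j) by rewrite leq_mul2l hh orbT.
lia.
Qed.

Lemma key10 n K : thr1 <= n - a ->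
  'C(2 * K * a * kk.+2 + kk.+2, kk.+2) + kk <= n - a ->
  2 * a * K * kk.+1 + kk <= n ->
  K * 'C(n, kk.+1) <= K * 'C(bn n, kk.+1) + 'C(n, kk.+1).
Proof.
move=> hm hL hn; have h := leq_trans thr1_ge hm.
have tL : 2 * K * a * kk.+2 + kk.+2 < tn n.
  apply: t_gt; have := M_ge n; lia.
have t3 := t_ge3 h.
have [H1 _] := tn_spec n.
have [Tb _] := bn_spec n.
have Ts := T_split h.
have Tl := T_le h.
have E3 : kk.+2 * Tn n = ((tn n).-1 - kk.+1) * 'C((tn n).-1, kk.+1) by rewrite /Tn mul_bin_left.
have E4 : kk.+1 * 'C(n, kk.+1) = (n - kk) * 'C(n, kk) by rewrite mul_bin_left.
have H3 : 'C(n, kk.+1) <= Mn n + a * 'C(n, kk).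
  by have := bin_shift (n - a) a kk; rewrite subnK //; lia.
have bm := b_le h.
have Cbm : 'C(bn n, kk.+1) <= Mn n by apply: leq_bin2l.
have Mn_le : Mn n <= 'C(n, kk.+1) by apply: leq_bin2l; lia.
move: E3 E4 H3 Cbm Mn_le Ts Tl H1 Tb.
rewrite /Tn.
set t := tn n in tL t3 *; set X := 'C(t.-1, kk.+1); set T := 'C(t.-1, kk.+2).
set M := Mn n; set Cn := 'C(n, kk.+1); set Y := 'C(n, kk); set Cb := 'C(bn n, kk.+1).
move=> E3 E4 H3 Cbm Mn_le Ts Tl H1 Tb.
have A1 : 2 * K * a * kk.+2 * X <= (t.-1 - kk.+1) * X by rewrite leq_mul2r; apply/orP; right; lia.
have A2 : kk.+2 * T <= kk.+2 * (a * M) by rewrite leq_mul2l Tl orbT.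
have H2 : 2 * K * X <= M.
  have : (kk.+2 * a) * (2 * K * X) <= (kk.+2 * a) * M by lia.
  by rewrite leq_pmul2l //; lia.
have A3 : (2 * a * K * kk.+1) * Y <= (n - kk) * Y.
  by rewrite leq_mul2r; apply/orP; right; lia.
have H4 : 2 * a * K * Y <= Cn.
  have : kk.+1 * (2 * a * K * Y) <= kk.+1 * Cn by lia.
  by rewrite leq_pmul2l.
have HH : a * M < a * Cb + X by lia.
have P1 : (a * K) * Cn <= (a * K) * (M + a * Y) by rewrite leq_mul2l H3 orbT.
have P2 : K * (a * M) <= K * (a * Cb + X) by rewrite leq_mul2l (ltnW HH) orbT.
have P3 : a * (2 * a * K * Y) <= a * Cn by rewrite leq_mul2l H4 orbT.
have P4 : Cn <= a * Cn by rewrite leq_pmull //; lia.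
have : a * (K * Cn) <= a * (K * Cb + Cn) by lia.
by rewrite leq_pmul2l //; lia.
Qed.

End Num.

Import Order.TTheory GRing.Theory Num.Theory.

Lemma main kk ss :
  exists (G : forall n : nat, {set {set 'I_n}}) (N0 : nat),
    (forall n : nat, (N0 <= n)%N ->
       [/\ k_uniform kk.+3 (G n),
           nu (G n) = ss.+1 &
           (#|shadow kk.+3 (G n)| < #|shadow kk.+3 (colex_init #|G n| (EM1 n kk.+3 ss.+1))|)%N])
    /\
    (forall eps : rat, (0 < eps)%R ->
       exists N : nat, forall n : nat, (N <= n)%N ->
         (`| (#|G n|%:R : rat) - ('C(2 * ss.+1 + 1, 2) * 'C(n, kk.+3 - 2))%:R |
           <= eps * ('C(2 * ss.+1 + 1, 2) * 'C(n, kk.+3 - 2))%:R)%R).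
Proof.
set a := 2 * ss.+1 + 1.
have -> : kk.+3 - 2 = kk.+1 by [].
exists (fun n => GG kk ss n (bn kk ss n)).
pose L9 := 'C(a * 'C(ss.+1 * kk.+1, kk.+1) + kk.+3, kk.+2) + kk.
exists (a + thr1 kk ss + L9); split.
  move=> n hn.
  have hm : thr1 kk ss <= n - a by lia.
  have hL : L9 <= n - a by lia.
  have h := leq_trans (thr1_ge kk ss) hm.
  have bm := b_le h.
  have hab : a + bn kk ss n <= n by lia.
  have t3 := t_ge3 h.
  have ts := t_small hm.
  have tn : tn kk ss n <= n.
    apply: leq_trans (_ : 2 * ss.+1 * tn kk ss n <= n).
      by rewrite leq_pmull //.
    lia.
  split.
  - by apply/forall_inP => A; rewrite inE => /and3P[].
  - apply/eqP; rewrite eqn_leq; apply/andP; split.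
      apply/bigmax_leqP => F /andP[]; rewrite powersetE => sF pd.
      by apply: nu_GG_le sF pd; lia.
    have [F [sF pd cF]] := nu_GG_ge hab (key9 hm hL).
    by rewrite -cF; apply: leq_bigmax_cond; rewrite powersetE sF pd.
  - apply: leq_ltn_trans (shadow_GG kk hab) _.
    apply: leq_trans (key7 hm) _.
    apply: shadow_colex => //.
    by rewrite card_GG //; apply: key8.
move=> eps eps0.
set K := Num.Def.archi_bound (eps^-1).
have hK : (eps^-1 < K%:R)%R by apply: archi_boundP; rewrite invr_ge0 ltW.
pose L10 := 'C(2 * K * a * kk.+2 + kk.+2, kk.+2) + kk.
exists (a + thr1 kk ss + L10 + (2 * a * K * kk.+1 + kk)) => n hn.
have hm : thr1 kk ss <= n - a by lia.
have hL : L10 <= n - a by lia.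
have h := leq_trans (thr1_ge kk ss) hm.
have bm := b_le h.
have hab : a + bn kk ss n <= n by lia.
have k10 := key10 hm hL (_ : 2 * a * K * kk.+1 + kk <= n).
rewrite card_GG //.
set c := 'C(a, 2).
set Cn := 'C(n, kk.+1); set Cb := 'C(bn kk ss n, kk.+1).
have Cbn : Cb <= Cn by apply: leq_bin2l; lia.
have le : c * Cb <= c * Cn by rewrite leq_mul2l Cbn orbT.
have k10' : K * (c * Cn - c * Cb) <= c * Cn.
  rewrite mulnBr leq_subLR.
  have : c * (K * Cn) <= c * (K * Cb + Cn) by rewrite leq_mul2l k10 ?orbT //; lia.
  lia.
rewrite distrC ger0_norm; last by rewrite subr_ge0 ler_nat.
rewrite -natrB //.
set d := (c * Cn - c * Cb).
have dK : (K%:R * d%:R <= (c * Cn)%:R :> rat)%R by rewrite -natrM ler_nat.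
have eK : (1 <= eps * K%:R :> rat)%R.
  by have := hK; rewrite -(ltr_pM2l eps0) mulfV ?lt0r_neq0 // => /ltW.
apply: (@le_trans _ _ (eps * (K%:R * d%:R))%R).
  by rewrite mulrA -{1}[(d%:R)%R]mul1r ler_wpM2r // ler0n.
by rewrite ler_wpM2l // ltW.
Qed.


Local Open Scope ring_scope.

Theorem fact1p11 (k s : nat) :
  (3 <= k)%N -> (1 <= s)%N ->
  exists (G : forall n : nat, {set {set 'I_n}}) (N0 : nat),
    (forall n : nat, (N0 <= n)%N ->
       [/\ k_uniform k (G n),
           nu (G n) = s &
           (#|shadow k (G n)| < #|shadow k (colex_init #|G n| (EM1 n k s))|)%N])
    /\
    (forall eps : rat, 0 < eps ->
       exists N : nat, forall n : nat, (N <= n)%N ->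
         `| (#|G n|%:R : rat) - ('C(2 * s + 1, 2) * 'C(n, k - 2))%:R |
           <= eps * ('C(2 * s + 1, 2) * 'C(n, k - 2))%:R).
Proof.
move=> hk hs.
case: k hk => [|[|[|kk]]] // _.
case: s hs => [|ss] // _.
exact: main.
Qed.
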